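(* Let $\mu$ be the uniform probability measure on $\{-1,1\}^n$. There exists a universal constant $\kappa>0$ (independent of $n$) such that for every $V\subset\mathbb{R}^n$, $$\log\int \exp\Big(\sup_{\xi\in V}\{\langle\xi,x\rangle-\Lambda_\mu(\xi)\}\Big)\,d\mu(x)\le\kappa\, b(V).$$
   Context: $\Lambda_\mu(\xi)=\log\int e^{\langle\xi,x\rangle}d\mu(x)$ is the logarithmic Laplace transform (here $\Lambda_\mu(\xi)=\sum_i\log\cosh\xi_i$). $b(V)=\mathbb{E}\sup_{\xi\in V}\langle\xi,\varepsilon\rangle$ with $\varepsilon$ uniformly distributed on $\{-1,1\}^n$ (Rademacher mean-width). *)

(* Defs.v *)
From HB Require Import structures.
From mathcomp Require Import all_boot all_order all_algebra.
From mathcomp Require Import all_classical all_reals all_analysis.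
Set Implicit Arguments. Unset Strict Implicit. Unset Printing Implicit Defensive.
Import Order.TTheory GRing.Theory Num.Theory.
Local Open Scope ring_scope.
Local Open Scope classical_set_scope.

Definition cube_pt {R : realType} {n : nat} (b : {ffun 'I_n -> bool}) : 'I_n -> R :=
  fun i => if b i then 1 else -1.

Definition dotv {R : realType} {n : nat} (u v : 'I_n -> R) : R :=
  \sum_(i < n) u i * v i.

Definition cube_int {R : realType} {n : nat} (f : ('I_n -> R) -> R) : R :=
  (2 ^+ n)^-1 * \sum_(b : {ffun 'I_n -> bool}) f (cube_pt b).

Definition cube_inte {R : realType} {n : nat} (f : ('I_n -> R) -> \bar R) : \bar R :=
  (((2 ^+ n)^-1 : R)%:E * \sum_(b : {ffun 'I_n -> bool}) f (cube_pt b))%E.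

Definition Lambda_mu {R : realType} {n : nat} (xi : 'I_n -> R) : R :=
  ln (cube_int (fun x => expR (dotv xi x))).

Definition rad_width {R : realType} {n : nat} (V : set ('I_n -> R)) : \bar R :=
  cube_inte (fun eps => ereal_sup [set (dotv xi eps)%:E | xi in V]).

Definition lhs_P24 {R : realType} {n : nat} (V : set ('I_n -> R)) : \bar R :=
  lne (cube_inte (fun x =>
    expeR (ereal_sup [set (dotv xi x - Lambda_mu xi)%:E | xi in V]))).

(* Main.v *)
Require Import Defs.
From HB Require Import structures.
From mathcomp Require Import all_boot all_order all_algebra.
From mathcomp Require Import all_classical all_reals all_analysis.
From mathcomp Require Import ring lra.
Import Order.TTheory GRing.Theory Num.Theory.
Local Open Scope ring_scope.
Local Open Scope classical_set_scope.
Definition hh {R : realType} (u : R) : R :=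
  (1 + u) / 2 * ln ((1 + u) / 2) + (1 - (1 + u) / 2) * ln (1 - (1 + u) / 2) + ln 2.

Lemma gibbs {R : realType} (p q : R) : 0 <= p -> 0 < q -> p * ln q - p * ln p <= q - p.
Proof.
move=> p0 q0; have [->|pp] := eqVneq p 0; first by rewrite !mul0r !subr0 ltW.
have pg : 0 < p by rewrite lt_def pp.
have qp : 0 < q / p by rewrite divr_gt0.
have H : ln (q / p) <= q / p - 1.
  have := @le_ln1Dx R (q / p - 1).
  rewrite addrCA subrr addr0; apply; lra.
rewrite ln_div ?posrE // in H.
have : p * (ln q - ln p) <= p * (q / p - 1) by rewrite ler_pM2l.
by rewrite mulrBr mulrBr mulr1 mulrCA divff ?mulr1 // gt_eqF.
Qed.

Lemma young {R : realType} (t u : R) : -1 <= u <= 1 ->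
  t * u - hh u <= ln ((expR t + expR (- t)) / 2).
Proof.
move=> /andP[u1 u2].
set Z := expR t + expR (- t).
have Z0 : 0 < Z by rewrite addr_gt0 // expR_gt0.
have q10 : 0 < expR t / Z by rewrite divr_gt0 // expR_gt0.
have q20 : 0 < expR (- t) / Z by rewrite divr_gt0 // expR_gt0.
have p1 : 0 <= (1 + u) / 2 by lra.
have p2 : 0 <= 1 - (1 + u) / 2 by lra.
have G1 := @gibbs R _ _ p1 q10.
have G2 := @gibbs R _ _ p2 q20.
have E1 : ln (expR t / Z) = t - ln Z by rewrite ln_div ?posrE ?expR_gt0 // expRK.
have E2 : ln (expR (- t) / Z) = - t - ln Z by rewrite ln_div ?posrE ?expR_gt0 // expRK.
have E3 : ln (Z / 2) = ln Z - ln 2 by rewrite ln_div ?posrE.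
have S : expR t / Z + expR (- t) / Z = 1 by rewrite -mulrDl divff // gt_eqF.
rewrite E1 in G1; rewrite E2 in G2; rewrite E3 /hh.
set a := ln ((1 + u) / 2) in G1 *.
set b := ln (1 - (1 + u) / 2) in G2 *.
set L := ln Z in G1 G2 *.
have G := lerD G1 G2.
have -> : t * u - ((1 + u) / 2 * a + (1 - (1 + u) / 2) * b + ln 2) = 
   ((1 + u) / 2 * (t - L) - (1 + u) / 2 * a + ((1 - (1 + u) / 2) * (- t - L) - (1 - (1 + u) / 2) * b)) + L - ln 2 by field.
lra.
Qed.

Lemma hh_opt {R : realType} (d : R) :
  expR (hh (2 * (expR d / (expR d + expR (- d))) - 1) -
        (2 * (expR d / (expR d + expR (- d))) - 1) * d) * (expR d + expR (- d)) = 2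
  /\ -1 <= 2 * (expR d / (expR d + expR (- d))) - 1 <= 1.
Proof.
set Z := expR d + expR (- d).
have Z0 : 0 < Z by rewrite addr_gt0 // expR_gt0.
have Zn : Z != 0 by rewrite gt_eqF.
set q := expR d / Z.
have q0 : 0 < q by rewrite divr_gt0 // expR_gt0.
have q' : 1 - q = expR (- d) / Z.
  rewrite /q; apply: (mulIf Zn); rewrite mulrBl !divfK // mul1r.
  by rewrite /Z addrC addKr.
have q'0 : 0 < 1 - q by rewrite q' divr_gt0 // expR_gt0.
have Ep : (1 + (2 * q - 1)) / 2 = q by field.
have E1 : ln q = d - ln Z by rewrite ln_div ?posrE ?expR_gt0 // expRK.
have E2 : ln (1 - q) = - d - ln Z by rewrite q' ln_div ?posrE ?expR_gt0 // expRK.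
split; last by apply/andP; split; lra.
rewrite /hh Ep E1 E2.
have -> : q * (d - ln Z) + (1 - q) * (- d - ln Z) + ln 2 - (2 * q - 1) * d = ln 2 - ln Z by ring.
by rewrite expRD expRN !lnK ?posrE // divfK.
Qed.

Definition sg {R : realType} (s : bool) : R := if s then 1 else -1.
Definition kk {R : realType} (u x y : R) : R := (1 + y * (x - u) / 2) / 2.
Definition KK {R : realType} {n} (u : 'I_n -> R) (b c : {ffun 'I_n -> bool}) : R :=
  \prod_(i < n) kk (u i) (sg (b i)) (sg (c i)).
Definition HH {R : realType} {n} (u : 'I_n -> R) : R := \sum_(i < n) hh (u i).
Definition consb {n} (s : bool) (b : {ffun 'I_n -> bool}) : {ffun 'I_n.+1 -> bool} :=
  [ffun i => if unlift ord0 i is Some j then b j else s].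
Definition consu {R : realType} {n} (a : R) (u : 'I_n -> R) : 'I_n.+1 -> R :=
  fun i => if unlift ord0 i is Some j then u j else a.

Lemma consb0 n s (b : {ffun 'I_n -> bool}) : consb s b ord0 = s.
Proof. by rewrite ffunE unlift_none. Qed.
Lemma consbS n s (b : {ffun 'I_n -> bool}) j : consb s b (lift ord0 j) = b j.
Proof. by rewrite ffunE liftK. Qed.
Lemma consu0 {R : realType} n (a : R) (u : 'I_n -> R) : consu a u ord0 = a.
Proof. by rewrite /consu unlift_none. Qed.
Lemma consuS {R : realType} n (a : R) (u : 'I_n -> R) j : consu a u (lift ord0 j) = u j.
Proof. by rewrite /consu liftK. Qed.

Lemma split_sum {R : realType} n (G : {ffun 'I_n.+1 -> bool} -> R) :
  \sum_b G b = \sum_(s : bool) \sum_(b : {ffun 'I_n -> bool}) G (consb s b).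
Proof.
rewrite pair_big /=.
rewrite (reindex (fun p : bool * {ffun 'I_n -> bool} => consb p.1 p.2)) //.
exists (fun b : {ffun 'I_n.+1 -> bool} => (b ord0, [ffun j => b (lift ord0 j)])).
  move=> [s b] _ /=; rewrite consb0; congr pair; apply/ffunP => j.
  by rewrite ffunE consbS.
move=> b _ /=; apply/ffunP => i; rewrite ffunE.
by case: unliftP => [j ->|->]; rewrite ?ffunE.
Qed.

Lemma KK_cons {R : realType} n (a : R) u s t (b c : {ffun 'I_n -> bool}) :
  KK (consu a u) (consb s b) (consb t c) = kk a (sg s) (sg t) * KK u b c.
Proof.
rewrite /KK big_ord_recl consu0 !consb0; congr (_ * _).
by apply: eq_bigr => i _; rewrite consuS !consbS.
Qed.

Lemma HH_cons {R : realType} n (a : R) (u : 'I_n -> R) :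
  HH (consu a u) = hh a + HH u.
Proof.
rewrite /HH big_ord_recl consu0; congr (_ + _).
by apply: eq_bigr => i _; rewrite consuS.
Qed.

Lemma main_ind {R : realType} n (f S : {ffun 'I_n -> bool} -> R) :
  (forall b (u : 'I_n -> R), (forall i, -1 <= u i <= 1) ->
     f b <= 2 * \sum_c (KK u b c * S c) + HH u) ->
  \sum_b expR (f b) <= 2 ^+ n * expR (2 * ((2 ^+ n)^-1 * \sum_c S c)).
Proof.
elim: n f S => [|n IH] f S hyp.
  have Hb b : f b <= 2 * \sum_c S c.
    have r0 : forall i : 'I_0, -1 <= (fun _ => 0 : R) i <= 1 by case.
    have := hyp b _ r0.
    under eq_bigr => c _ do rewrite /KK big_ord0 mul1r.
    by rewrite /HH big_ord0 addr0.
  rewrite expr0 invr1 !mul1r.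
  apply: (@le_trans _ _ (\sum_(b : {ffun 'I_0 -> bool}) expR (2 * \sum_c S c))).
    by apply: ler_sum => b _; rewrite ler_expR.
  by rewrite sumr_const card_ffun card_bool card_ord /= mulr1n.
set T := fun t : bool => (2 ^+ n)^-1 * \sum_c S (consb t c).
set d := (T true - T false) / 2.
have [Eq Hu] := hh_opt d.
set Z := expR d + expR (- d) in Eq Hu.
set u1 := 2 * (expR d / Z) - 1 in Eq Hu.
pose fs s := fun b => f (consb s b) - hh u1.
pose Ss s := fun c => \sum_(t : bool) kk u1 (sg s) (sg t) * S (consb t c).
have IHs s : \sum_b expR (fs s b) <= 2 ^+ n * expR (2 * ((2 ^+ n)^-1 * \sum_c Ss s c)).
  apply: IH => b u Hr.
  have Hr' : forall i, -1 <= consu u1 u i <= 1.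
    by move=> i; rewrite /consu; case: (unlift ord0 i) => [j|] //.
  have := hyp (consb s b) (consu u1 u) Hr'.
  rewrite split_sum HH_cons.
  have -> : \sum_(t : bool) \sum_c KK (consu u1 u) (consb s b) (consb t c) * S (consb t c)
      = \sum_c KK u b c * Ss s c.
    rewrite exchange_big /=; apply: eq_bigr => c _.
    rewrite /Ss mulr_sumr; apply: eq_bigr => t _.
    by rewrite KK_cons mulrCA mulrA.
  rewrite /fs; lra.
have p2 : (0 : R) < 2 ^+ n by rewrite exprn_gt0.
have E s : \sum_b expR (f (consb s b)) = expR (hh u1) * \sum_b expR (fs s b).
  rewrite mulr_sumr; apply: eq_bigr => b _; rewrite -expRD /fs; congr expR; ring.
have ES s : (2 ^+ n)^-1 * \sum_c Ss s c = \sum_(t : bool) kk u1 (sg s) (sg t) * T t.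
  rewrite /Ss exchange_big /= mulr_sumr; apply: eq_bigr => t _.
  by rewrite /T -mulr_sumr mulrCA.
have EST : \sum_c S c = 2 ^+ n * (T true + T false).
  rewrite split_sum big_bool /T mulrDr !mulrA divff ?gt_eqF // !mul1r.
  by [].
apply: (@le_trans _ _ (\sum_(s : bool) expR (hh u1) *
    (2 ^+ n * expR (2 * ((2 ^+ n)^-1 * \sum_c Ss s c))))).
  rewrite split_sum; apply: ler_sum => s _.
  by rewrite E ler_pM2l ?expR_gt0 // IHs.
rewrite big_bool !ES !big_bool /sg EST /=.
have E1 : expR (2 * (kk u1 1 1 * T true + kk u1 1 (-1) * T false)) =
   expR (T true + T false) * expR (- (u1 * d)) * expR d.
  by rewrite -!expRD; congr expR; rewrite /d /kk; field.
have E2 : expR (2 * (kk u1 (-1) 1 * T true + kk u1 (-1) (-1) * T false)) =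
   expR (T true + T false) * expR (- (u1 * d)) * expR (- d).
  by rewrite -!expRD; congr expR; rewrite /d /kk; field.
rewrite E1 E2.
have -> : 2 * ((2 ^+ n.+1)^-1 * (2 ^+ n * (T true + T false))) = T true + T false.
  by rewrite exprS; field; rewrite gt_eqF.
have E3 : expR (hh u1) * expR (- (u1 * d)) * Z = 2 by rewrite -expRD.
rewrite exprS -E3 /Z; rewrite le_eqVlt; apply/orP; left; apply/eqP; ring.
Qed.

Lemma KK_sum1 {R : realType} n (u : 'I_n -> R) b : \sum_c KK u b c = 1.
Proof.
rewrite /KK -(bigA_distr_bigA (fun i s => kk (u i) (sg (b i)) (sg s))) /=.
apply: big1 => i _; rewrite big_bool /kk /sg /=; by field.
Qed.

Lemma KK_mean {R : realType} n (u : 'I_n -> R) b i :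
  \sum_c KK u b c * sg (c i) = (sg (b i) - u i) / 2.
Proof.
have -> : \sum_c KK u b c * sg (c i) = \sum_(c : {ffun 'I_n -> bool})
    \prod_j (kk (u j) (sg (b j)) (sg (c j)) * (if j == i then sg (c j) else 1)).
  apply: eq_bigr => c _; rewrite big_split /=; congr (_ * _).
  by rewrite -big_mkcond /= big_pred1_eq.
rewrite -(bigA_distr_bigA (fun j s => kk (u j) (sg (b j)) (sg s) * (if j == i then sg s else 1))) /=.
rewrite (bigD1 i) //= [X in _ * X]big1 ?mulr1.
  by rewrite big_bool eqxx /kk /sg /=; field.
move=> j /negPf ->; rewrite big_bool /kk /sg /=; by field.
Qed.

Lemma cube_int_exp {R : realType} n (xi : 'I_n -> R) :
  cube_int (fun x => expR (dotv xi x)) =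
  \prod_(i < n) ((expR (xi i) + expR (- xi i)) / 2).
Proof.
rewrite /cube_int /dotv /cube_pt.
under eq_bigr => b _ do rewrite expR_sum.
rewrite -(bigA_distr_bigA (fun i (s : bool) => expR (xi i * (if s then 1 else -1)))) /=.
rewrite -[in X in X^-1 * _](card_ord n) -prodr_const -prodfV -big_split /=.
apply: eq_bigr => i _; rewrite big_bool /= mulr1 mulrN1 mulrC.
by [].
Qed.

Lemma Lambda_ge {R : realType} n (xi u : 'I_n -> R) : (forall i, -1 <= u i <= 1) ->
  \sum_i (xi i * u i - hh (u i)) <= Lambda_mu xi.
Proof.
move=> Hu.
have pos i : 0 < (expR (xi i) + expR (- xi i)) / 2 by rewrite divr_gt0 // addr_gt0 // expR_gt0.
rewrite /Lambda_mu cube_int_exp -[X in X <= _]expRK.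
rewrite ler_ln ?posrE ?expR_gt0 ?prodr_gt0 //.
rewrite expR_sum; apply: ler_prod => i _; rewrite expR_ge0 /=.
by have := @young R (xi i) (u i) (Hu i); rewrite -ler_expR lnK ?posrE.
Qed.

Lemma pt_bound {R : realType} n (xi u : 'I_n -> R) (S : {ffun 'I_n -> bool} -> R) b :
  (forall i, -1 <= u i <= 1) -> (forall c, dotv xi (cube_pt c) <= S c) ->
  dotv xi (cube_pt b) - Lambda_mu xi <= 2 * \sum_c (KK u b c * S c) + HH u.
Proof.
move=> Hu HS.
have L := @Lambda_ge R n xi u Hu.
rewrite sumrB in L.
have M : \sum_c KK u b c * dotv xi (cube_pt c) = \sum_i xi i * ((sg (b i) - u i) / 2).
  under eq_bigr do rewrite /dotv mulr_sumr.
  rewrite exchange_big /=; apply: eq_bigr => i _.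
  under eq_bigr do rewrite mulrCA.
  by rewrite -mulr_sumr -KK_mean.
have KK0 c : 0 <= KK u b c.
  apply: prodr_ge0 => i _; have := Hu i; rewrite /kk /sg.
  by case: (b i); case: (c i) => /andP[h1 h2]; lra.
have N : \sum_c KK u b c * dotv xi (cube_pt c) <= \sum_c KK u b c * S c.
  by apply: ler_sum => c _; rewrite ler_wpM2l.
have M2 : 2 * \sum_i xi i * ((sg (b i) - u i) / 2) =
   dotv xi (cube_pt b) - \sum_i xi i * u i.
  by rewrite mulr_sumr /dotv -sumrB; apply: eq_bigr => i _; rewrite /cube_pt /sg; field.
rewrite /HH; lra.
Qed.

Theorem proposition2p4 (R : realType) :
  exists kappa : R, 0 < kappa /\
    forall (n : nat) (V : set ('I_n -> R)),
      (lhs_P24 V <= kappa%:E * rad_width V)%E.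
Proof.
exists 2; split => // n V.
have [->|[xi0 Vxi0]] : V = set0 \/ exists x, V x.
  by have [|/set0P] := eqVneq V set0; [left|right].
  rewrite /lhs_P24 /cube_inte big1 ?mule0 /= ?lexx ?leNye //.
  by move=> b _; rewrite image_set0 ereal_sup0.
set Se := fun b : {ffun 'I_n -> bool} =>
  ereal_sup [set (dotv xi (cube_pt b))%:E | xi in V].
have Se_ge b : ((dotv xi0 (cube_pt b))%:E <= Se b)%E.
  by apply: ereal_sup_ubound; exists xi0.
have Se_NY b : Se b != -oo%E.
  by apply/negP => /eqP E; have := Se_ge b; rewrite E leeNy_eq.
have [[b0 Eb0]|Hfin] := pselect (exists b, Se b = +oo%E).
  have Hs : (\sum_b Se b = +oo)%E.
    rewrite (bigD1 b0) //= Eb0 addye //.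
    apply/negP; rewrite esum_eqNy => /existsP[b /andP[_ /eqP]].
    by move/eqP; rewrite (negbTE (Se_NY b)).
  have -> : rad_width V = +oo%E.
    rewrite /rad_width /cube_inte.
    have -> : (\sum_b (fun eps => ereal_sup [set (dotv xi eps)%:E | xi in V]) (cube_pt b))%E
       = (\sum_b Se b)%E by [].
    by rewrite Hs mulry gtr0_sg ?invr_gt0 ?exprn_gt0 // mul1e.
  by rewrite mulry gtr0_sg // mul1e leey.
have Se_fin b : Se b \is a fin_num.
  rewrite fin_numE Se_NY /=; apply/negP => /eqP E; apply: Hfin; by exists b.
pose S b := fine (Se b).
have SeE b : Se b = (S b)%:E by rewrite /S fineK.
have HS xi c : V xi -> dotv xi (cube_pt c) <= S c.
  by move=> Vxi; rewrite -lee_fin -SeE; apply: ereal_sup_ubound; exists xi.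
set Fe := fun b : {ffun 'I_n -> bool} =>
  ereal_sup [set (dotv xi (cube_pt b) - Lambda_mu xi)%:E | xi in V].
have Fe_ub b u : (forall i, -1 <= u i <= 1) ->
    (Fe b <= (2 * \sum_c (KK u b c * S c) + HH u)%:E)%E.
  move=> Hu; apply: ge_ereal_sup => y [xi Vxi <-]; rewrite lee_fin.
  by apply: pt_bound => // c; apply: HS.
have Fe_fin b : Fe b \is a fin_num.
  have Hr : forall i : 'I_n, -1 <= (fun _ => 0 : R) i <= 1 by move=> i; rewrite /=; lra.
  have h1 := Fe_ub b _ Hr.
  have h2 : ((dotv xi0 (cube_pt b) - Lambda_mu xi0)%:E <= Fe b)%E.
    by apply: ereal_sup_ubound; exists xi0.
  rewrite fin_numE; apply/andP; split; apply/negP => /eqP E; rewrite E in h1 h2.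
    by rewrite leeNy_eq in h2.
  by rewrite leye_eq in h1.
pose f b := fine (Fe b).
have FeE b : Fe b = (f b)%:E by rewrite /f fineK.
have Hmain := @main_ind R n f S (fun b u Hu => ltac:(rewrite -lee_fin -FeE; exact: Fe_ub)).
have -> : rad_width V = ((2 ^+ n)^-1 * \sum_b S b)%:E.
  rewrite /rad_width /cube_inte.
  have -> : (\sum_b (fun eps => ereal_sup [set (dotv xi eps)%:E | xi in V]) (cube_pt b))%E
     = (\sum_b (S b)%:E)%E by apply: eq_bigr => b _; rewrite -SeE.
  by rewrite sumEFin.
have -> : lhs_P24 V = (ln ((2 ^+ n)^-1 * \sum_b expR (f b)))%:E.
  rewrite /lhs_P24 /cube_inte.
  have -> : (\sum_b (fun x => expeR (ereal_sup [set (dotv xi x - Lambda_mu xi)%:E | xi in V])) (cube_pt b))%E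
     = (\sum_b (expR (f b))%:E)%E by apply: eq_bigr => b _; rewrite /= -/(Fe b) FeE.
  rewrite sumEFin -EFinM /= ifF //; apply/negbTE; rewrite -ltNge.
  rewrite mulr_gt0 ?invr_gt0 ?exprn_gt0 //.
  apply: (lt_le_trans (expR_gt0 (f [ffun _ => true]))).
  rewrite (bigD1 [ffun _ => true]) //= lerDl sumr_ge0 // => b _; exact: expR_ge0.
have Spos : 0 < \sum_b expR (f b).
  apply: (lt_le_trans (expR_gt0 (f [ffun _ => true]))).
  rewrite (bigD1 [ffun _ => true]) //= lerDl sumr_ge0 // => b _; exact: expR_ge0.
have p2 : (0 : R) < 2 ^+ n by rewrite exprn_gt0.
rewrite -EFinM lee_fin -ler_expR lnK ?posrE ?mulr_gt0 ?invr_gt0 //.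
rewrite -(ler_pM2l p2) mulrA divff ?gt_eqF // mul1r.
exact: Hmain.
Qed.
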